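(* Let $A\in\mathbb{R}^{n\times n}$, $B\in\mathbb{R}^{n\times m}$ with $m\ge1$ and $(A,B)$ uncontrollable, and let $r_c=r_c(A,B)$ be its zero-norm distance to controllability. Then (1) $r_c\le n-\operatorname{rank}B$ if $\operatorname{rank}B\ge 1$, and $r_c\le n$ if $\operatorname{rank}B=0$; (2) $r_c\ge \min\{|J|: J\subseteq\{1,\dots,n\},\ (A,[B,\ I_n(:,J)])\text{ is controllable}\}$.
   Context: $r_c(A,B)=\min\{\|[\Delta A,\Delta B]\|_0: \Delta A\in\mathbb{R}^{n\times n},\Delta B\in\mathbb{R}^{n\times m},(A+\Delta A,B+\Delta B)\text{ controllable}\}$, where $\|M\|_0$ is the number of nonzero entries of $M$. $I_n(:,J)$ is the submatrix of the $n\times n$ identity matrix consisting of the columns indexed by $J$. Controllability of $(A,B)$ means $\operatorname{rank}[B,AB,\dots,A^{n-1}B]=n$. *)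

(* Defs.v *)
From Stdlib Require Import ClassicalEpsilon.
From mathcomp Require Import all_boot all_order all_algebra.
From mathcomp Require Import reals.
Set Implicit Arguments. Unset Strict Implicit. Unset Printing Implicit Defensive.
Import Order.TTheory GRing.Theory Num.Theory.
Local Open Scope ring_scope.

(* The least natural number satisfying P (0 if none exists; classical). *)
Definition natmin (P : nat -> Prop) : nat :=
  match excluded_middle_informative (exists k, P k) with
  | left h =>
      @ex_minn (fun k => if excluded_middle_informative (P k) then true else false)
        (let: ex_intro k hk := h in
         ex_intro _ k (match excluded_middle_informative (P k) as b
                        return (if b then true else false) with
                       | left _ => erefl | right nk => False_ind _ (nk hk) end))
  | right _ => 0%N
  end.

Definition nnz (R : ringType) p q (M : 'M[R]_(p, q)) : nat :=
  #|[pred ij : 'I_p * 'I_q | M ij.1 ij.2 != 0]|.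

Definition ctrb_mx (R : ringType) n m (A : 'M[R]_n) (B : 'M[R]_(n, m)) :=
  \mxrow_(k < n) (A ^+ k *m B).

Definition controllable (R : fieldType) n m (A : 'M[R]_n) (B : 'M[R]_(n, m)) :
  Prop := \rank (ctrb_mx A B) = n.

(* I_n(:,J) : columns of the identity indexed by J (in increasing order). *)
Definition id_cols (R : ringType) n (J : {set 'I_n}) : 'M[R]_(n, #|J|) :=
  \matrix_(i < n, j < #|J|) (i == enum_val j)%:R.

Definition rc (R : fieldType) n m (A : 'M[R]_n) (B : 'M[R]_(n, m)) : nat :=
  natmin (fun k => exists (dA : 'M[R]_n) (dB : 'M[R]_(n, m)),
            nnz (row_mx dA dB) = k /\ controllable (A + dA) (B + dB)).

Definition min_aug (R : fieldType) n m (A : 'M[R]_n) (B : 'M[R]_(n, m)) : nat :=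
  natmin (fun k => exists J : {set 'I_n},
            #|J| = k /\ controllable A (row_mx B (id_cols R J))).

(* Main.v *)
Require Import Defs.
From Stdlib Require Import ClassicalEpsilon.
From mathcomp Require Import all_boot all_order all_algebra.
From mathcomp Require Import reals.
From mathcomp Require Import zify.
Set Implicit Arguments. Unset Strict Implicit. Unset Printing Implicit Defensive.
Import Order.TTheory GRing.Theory Num.Theory.
Local Open Scope ring_scope.

Lemma ctrlP (R : fieldType) n m (A : 'M[R]_n) (M : 'M[R]_(n,m)) :
  controllable A M <->
  (forall v : 'rV_n, (forall k : 'I_n, v *m (A ^+ k *m M) = 0) -> v = 0).
Proof.
rewrite /controllable /ctrb_mx; split.
  move=> hr v hv; apply/eqP; rewrite -(mulmx_free_eq0 _ (B := \mxrow_(k < n) (A ^+ k *m M))).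
    by rewrite mul_mxrow (eq_mxrow (B_ := fun _ => 0)) ?mxrow0.
  by rewrite /row_free hr.
move=> hv; apply/eqP; change (row_free (\mxrow_(k < n) (A ^+ k *m M))).
apply: inj_row_free => v; rewrite mul_mxrow => h; apply: hv => k.
have := (proj2 (eq_mxrowP _ _) (etrans h (esym (mxrow0 _)))) k.
by [].
Qed.


Lemma natminP (P : nat -> Prop) : (exists k, P k) ->
  P (natmin P) /\ forall k, P k -> (natmin P <= k)%N.
Proof.
move=> ex; rewrite /natmin.
case: (excluded_middle_informative (exists k, P k)) => [h|//].
case: ex_minnP => k hk hmin; split.
  by move: hk; case: (excluded_middle_informative (P k)).
move=> j Pj; apply: hmin.
by case: (excluded_middle_informative (P j)).
Qed.


Lemma part2 (R : fieldType) n m (A dA : 'M[R]_n) (B dB : 'M[R]_(n,m)) :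
  controllable (A + dA) (B + dB) -> (min_aug A B <= nnz (row_mx dA dB))%N.
Proof.
move=> hc.
pose S := [set ij : 'I_n * 'I_(n + m) | row_mx dA dB ij.1 ij.2 != 0].
pose J := [set ij.1 | ij in S].
have cJ : (#|J| <= nnz (row_mx dA dB))%N.
  apply: leq_trans (leq_imset_card _ _) _.
  by rewrite /nnz /S cardsE.
have hA : forall i j, dA i j != 0 -> i \in J.
  move=> i j h; apply/imsetP; exists (i, lshift m j) => //.
  by rewrite inE /= row_mxEl.
have hB : forall i j, dB i j != 0 -> i \in J.
  move=> i j h; apply/imsetP; exists (i, rshift n j) => //.
  by rewrite inE /= row_mxEr.
have vJ : forall u : 'rV[R]_n, u *m id_cols R J = 0 -> forall i, i \in J -> u 0 i = 0.
  move=> u hu i iJ.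
  move/matrixP: hu => /(_ 0 (enum_rank_in iJ i)); rewrite !mxE => <-.
  rewrite (bigD1 i) //= big1 ?addr0; first by rewrite !mxE enum_rankK_in // eqxx mulr1.
  by move=> k /negbTE hk; rewrite !mxE enum_rankK_in // hk mulr0.
have uA : forall u : 'rV[R]_n, (forall i, i \in J -> u 0 i = 0) -> u *m dA = 0.
  move=> u hu; apply/matrixP => a j; rewrite !mxE (ord1 a) big1 // => i _.
  case: (boolP (i \in J)) => iJ; first by rewrite hu // mul0r.
  by case: (eqVneq (dA i j) 0) => [->|/hA]; [rewrite mulr0|rewrite (negbTE iJ)].
have uB : forall u : 'rV[R]_n, (forall i, i \in J -> u 0 i = 0) -> u *m dB = 0.
  move=> u hu; apply/matrixP => a j; rewrite !mxE (ord1 a) big1 // => i _.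
  case: (boolP (i \in J)) => iJ; first by rewrite hu // mul0r.
  by case: (eqVneq (dB i j) 0) => [->|/hB]; [rewrite mulr0|rewrite (negbTE iJ)].
have ctr : controllable A (row_mx B (id_cols R J)).
  apply/ctrlP => v hv.
  have hv2 : forall k, (k < n)%N -> v *m A ^+ k *m B = 0 /\ v *m A ^+ k *m id_cols R J = 0.
    move=> k kn; have := hv (Ordinal kn); rewrite /= mulmxA mul_mx_row => /eqP.
    by rewrite row_mx_eq0 => /andP[/eqP -> /eqP ->].
  have hpow : forall k, (k < n)%N -> v *m (A + dA) ^+ k = v *m A ^+ k.
    elim=> [|k IH] kn; first by rewrite !expr0.
    rewrite !exprSr !mulmxA IH ?(ltnW kn) // mulmxDr uA ?addr0 //.
    by apply: vJ; case: (hv2 k (ltnW kn)).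
  apply: (proj1 (ctrlP _ _) hc) => k.
  rewrite mulmxA hpow // mulmxDr uB ?addr0; first by case: (hv2 k (ltn_ord k)).
  by apply: vJ; case: (hv2 k (ltn_ord k)).
rewrite /min_aug; set P := (fun k => _).
have PJ : P #|J| by exists J.
have [_ hm] := natminP (ex_intro _ #|J| PJ).
exact: leq_trans (hm _ PJ) cJ.
Qed.


Definition EQ (R : fieldType) n (Q : {set 'I_n}) : 'M[R]_n :=
  (\sum_(q in Q) <<(delta_mx 0 q : 'rV[R]_n)>>)%MS.

Lemma greedy (R : fieldType) n (l : seq 'I_n) : forall (S : 'M[R]_n),
  exists Q : {set 'I_n}, (#|Q| + \rank S <= \rank (S + EQ R Q))%N /\
    (forall i, i \in l -> ((delta_mx 0 i : 'rV[R]_n) <= S + EQ R Q)%MS) /\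
    (forall q, q \in Q -> q \in l).
Proof.
elim: l => [|i l IH] S.
  exists set0; rewrite cards0 /EQ big_set0 addsmx0; split=> //; split=> // q.
  by rewrite inE.
case: (boolP ((delta_mx 0 i : 'rV[R]_n) <= S)%MS) => hi.
  have [Q [h1 [h2 h3]]] := IH S; exists Q; split=> //; split.
    move=> j; rewrite inE => /orP[/eqP->|jl]; last exact: h2.
    exact: submx_trans hi (addsmxSl _ _).
  by move=> q /h3 ql; rewrite inE ql orbT.
pose S1 := (S + <<(delta_mx 0 i : 'rV[R]_n)>>)%MS.
have [Q [h1 [h2 h3]]] := IH S1; exists (i |: Q).
have sub : (S1 + EQ R Q <= S + EQ R (i |: Q))%MS.
  rewrite addsmx_sub; apply/andP; split.
    rewrite addsmx_sub; apply/andP; split; first exact: addsmxSl.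
    apply: submx_trans (addsmxSr _ _); apply: (sumsmx_sup i) => //.
    by rewrite !inE eqxx.
  apply: submx_trans (addsmxSr _ _); apply/sumsmx_subP => q qQ.
  by apply: (sumsmx_sup q) => //; rewrite inE qQ orbT.
have lt : (\rank S < \rank S1)%N.
  have : (S < S1)%MS.
    rewrite ltmxE addsmxSl /=; apply: contra hi => h.
    by apply: submx_trans h; apply: submx_trans (addsmxSr S _); rewrite genmxE.
  by rewrite ltmxErank => /andP[].
split.
  rewrite cardsU1; apply: leq_trans (mxrankS sub).
  apply: leq_trans h1; case: (i \in Q) => /=; lia.
split.
  move=> j; rewrite inE => /orP[/eqP->|jl]; last exact: submx_trans (h2 _ jl) sub.
  apply: submx_trans sub; apply: submx_trans (addsmxSl _ _).
  by apply: submx_trans (addsmxSr S _); rewrite genmxE.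
move=> q; rewrite !inE => /orP[->//|/h3 ->]; by rewrite orbT.
Qed.


Lemma pickQ (R : fieldType) n m (B : 'M[R]_(n,m)) p c : B p c != 0 ->
  exists Q : {set 'I_n}, p \notin Q /\ (#|Q| + \rank B <= n)%N /\
   forall v : 'rV_n, v *m B = 0 -> (forall q, q \in Q -> v 0 q = 0) -> v = 0.
Proof.
move=> hpc.
have [Q [h1 [h2 h3]]] := greedy [seq i <- enum 'I_n | i != p] <<B^T>>%MS.
exists Q; split.
  by apply/negP => /h3; rewrite mem_filter eqxx.
split.
  by move: h1; rewrite genmxE mxrank_tr => h; apply: leq_trans h (rank_leq_col _).
move=> v vB vQ.
have K : (<<B^T>> + EQ R Q <= kermx v^T)%MS.
  rewrite addsmx_sub; apply/andP; split.
    by rewrite genmxE; apply/sub_kermxP; rewrite -trmx_mul vB trmx0.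
  apply/sumsmx_subP => q qQ; rewrite genmxE; apply/sub_kermxP.
  rewrite -rowE; apply/rowP => a; rewrite !mxE.
  by rewrite (ord1 a) vQ.
have vi : forall i, i != p -> v 0 i = 0.
  move=> i ip.
  have : ((delta_mx 0 i : 'rV[R]_n) <= kermx v^T)%MS.
    by apply: submx_trans (h2 i _) K; rewrite mem_filter ip mem_enum.
  move/sub_kermxP; rewrite -rowE => /rowP /(_ 0); rewrite !mxE => ->.
  by [].
have vp : v 0 p = 0.
  move/matrixP: vB => /(_ 0 c); rewrite !mxE (bigD1 p) //= big1.
    by rewrite addr0 => /eqP; rewrite mulf_eq0 (negbTE hpc) orbF => /eqP.
  by move=> i ip; rewrite vi // mul0r.
apply/rowP => i; rewrite mxE; case: (eqVneq i p) => [->//|]; exact: vi.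
Qed.


Definition chainC (R : fieldType) n (p : 'I_n) (Q : {set 'I_n}) : 'M[R]_n :=
  \sum_(k < #|Q|) delta_mx (nth p (p :: enum Q) k.+1) (nth p (p :: enum Q) k).

Lemma delta_mulE (R : fieldType) n (a b i : 'I_n) (x : 'cV[R]_n) :
  (delta_mx a b *m x) i 0 = (i == a)%:R * x b 0.
Proof.
rewrite mxE (bigD1 b) //= big1 ?addr0; first by rewrite mxE eqxx andbT.
by move=> j /negbTE jb; rewrite mxE jb andbF mul0r.
Qed.

Lemma chain_ctrl (R : fieldType) n m (B : 'M[R]_(n,m)) p c (Q : {set 'I_n}) :
  B p c != 0 -> p \notin Q -> (#|Q| < n)%N ->
  (forall v : 'rV_n, v *m B = 0 -> (forall q, q \in Q -> v 0 q = 0) -> v = 0) ->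
  controllable (chainC R p Q) B.
Proof.
move=> hpc hp hQn kill.
set d := #|Q|; set s := p :: enum Q; set C := chainC R p Q.
have ss : size s = d.+1 by rewrite /= -cardE.
have us : uniq s by rewrite /= mem_enum hp enum_uniq.
have inj : forall a b, (a < d.+1)%N -> (b < d.+1)%N -> nth p s a = nth p s b -> a = b.
  by move=> a b ha hb /eqP; rewrite nth_uniq ?ss // => /eqP.
have CxE : forall (x : 'cV[R]_n) i,
    (C *m x) i 0 = \sum_(k < d) (i == nth p s k.+1)%:R * x (nth p s k) 0.
  move=> x i; rewrite /C /chainC mulmx_suml summxE.
  by apply: eq_bigr => k _; rewrite delta_mulE.
have Cx1 : forall (x : 'cV[R]_n) k, (k < d)%N -> (C *m x) (nth p s k.+1) 0 = x (nth p s k) 0.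
  move=> x k kd; rewrite CxE (bigD1 (Ordinal kd)) //= eqxx mul1r big1 ?addr0 //.
  move=> j jk; case: eqP => [h|]; last by rewrite mul0r.
  have := inj k.+1 j.+1 _ _ h; rewrite !ltnS kd ltn_ord => /(_ isT isT) [hk].
  by move: jk; rewrite -val_eqE /= hk eqxx.
have Cx0 : forall (x : 'cV[R]_n) i, (C *m x) i 0 != 0 ->
    exists2 k, (k < d)%N & i = nth p s k.+1.
  move=> x i; rewrite CxE => h.
  case: (pickP (fun k : 'I_d => i == nth p s k.+1)) => [k /eqP ->|none].
    by exists k.
  by move: h; rewrite big1 ?eqxx // => k _; rewrite none mul0r.
pose x k : 'cV[R]_n := C ^+ k *m B *m delta_mx c 0.
have x0E : forall i, x 0%N i 0 = B i c.
  move=> i; rewrite /x expr0 mul1mx mxE (bigD1 c) //= big1 ?addr0.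
    by rewrite mxE !eqxx mulr1.
  by move=> j /negbTE jc; rewrite mxE jc mulr0.
have xS : forall k, x k.+1 = C *m x k.
  by move=> k; rewrite /x exprS -mulmxE !mulmxA.
have Inv : forall k, (k <= d)%N -> x k (nth p s k) 0 = B p c /\
    forall i, x k i 0 != 0 -> k = 0%N \/ exists j, [/\ (k <= j)%N, (j <= d)%N & i = nth p s j].
  elim=> [|k IH] kd.
    by split; [rewrite x0E | left].
  have [IH1 IH2] := IH (ltnW kd).
  split; first by rewrite xS Cx1.
  move=> i; rewrite xS => h; have [k' k'd hi] := Cx0 _ _ h; subst i; right.
  move: h; rewrite Cx1 // => /IH2 [->|[j [kj jd hj]]].
    by exists k'.+1; split.
  have e := inj k' j (leqW k'd) (jd : (j < d.+1)%N) hj; subst j.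
  by exists k'.+1; split.
apply/ctrlP => v hv.
have n0 : (0 < n)%N by apply: leq_ltn_trans hQn.
have vB : v *m B = 0 by have := hv (Ordinal n0); rewrite /= expr0 mul1mx.
have vx : forall k, (k <= d)%N -> v *m x k = 0.
  move=> k kd; have := hv (Ordinal (leq_ltn_trans kd hQn)).
  by rewrite /x /= !mulmxA => ->; rewrite mul0mx.
have step : forall j, (1 <= j)%N -> (j <= d)%N ->
    (forall j', (j < j')%N -> (j' <= d)%N -> v 0 (nth p s j') = 0) -> v 0 (nth p s j) = 0.
  move=> j j1 jd IH.
  have [I1 I2] := Inv j jd.
  move/matrixP: (vx j jd) => /(_ 0 0); rewrite !mxE (bigD1 (nth p s j)) //= I1 big1.
    by rewrite addr0 => /eqP; rewrite mulf_eq0 (negbTE hpc) orbF => /eqP.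
  move=> i ij; case: (eqVneq (x j i 0) 0) => [->|/I2 [j0|[j' [jj' j'd hi]]]].
  - by rewrite mulr0.
  - by move: j1; rewrite j0.
  - have jne : j != j' by apply: contraNneq ij => ->; rewrite hi.
    by rewrite hi IH ?mul0r // ltn_neqAle jne jj'.
have all : forall t j, (d <= j + t)%N -> (1 <= j)%N -> (j <= d)%N -> v 0 (nth p s j) = 0.
  elim=> [|t IHt] j hjt j1 jd; apply: step => // j' jj' j'd.
    by move: hjt; rewrite addn0 => hdj; lia.
  by apply: IHt => //; [lia | apply: leq_trans jj'].
apply: kill => // q qQ.
have qe : q \in enum Q by rewrite mem_enum.
have := all d (index q (enum Q)).+1 (leq_addl _ _) isT.
rewrite /= nth_index //; apply.
by move: qe; rewrite -index_mem -cardE.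
Qed.


Lemma map_ctrb (aR rR : comNzRingType) (f : {rmorphism aR -> rR}) n m
   (X : 'M[aR]_n) (Y : 'M[aR]_(n, m)) :
  map_mx f (ctrb_mx X Y) = ctrb_mx (map_mx f X) (map_mx f Y).
Proof.
rewrite /ctrb_mx; apply/mxrowP => j.
have -> : submxrow (map_mx f (\mxrow_(k < n) (X ^+ k *m Y))) j =
          map_mx f (submxrow (\mxrow_(k < n) (X ^+ k *m Y)) j).
  by apply/matrixP => a b; rewrite !mxE.
rewrite !mxrowK map_mxM; congr (_ *m _).
elim: (nat_of_ord j) => [|k IH]; first by rewrite !expr0 map_mx1.
by rewrite !exprS -!mulmxE map_mxM IH.
Qed.

Lemma generic (R : numFieldType) n m (C A : 'M[R]_n) (B : 'M[R]_(n,m)) :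
  controllable C B -> exists t : R, t != 0 /\ controllable (C + t *: A) B.
Proof.
move=> hc.
have rf : row_free (ctrb_mx C B) by rewrite /row_free hc.
case/row_freeP: rf => N hN.
pose Pp := ctrb_mx (map_mx polyC C + 'X *: map_mx polyC A) (map_mx polyC B) *m map_mx polyC N.
have mapC : forall p q (M : 'M[R]_(p, q)) t, map_mx (horner_eval t) (map_mx polyC M) = M.
  by move=> p q M t; apply/matrixP => a b; rewrite !mxE /= horner_evalE hornerC.
have evalE : forall t, (\det Pp).[t] = \det (ctrb_mx (C + t *: A) B *m N).
  move=> t; rewrite -horner_evalE -det_map_mx map_mxM map_ctrb map_mxD map_mxZ !mapC.
  by rewrite /= horner_evalE hornerX.
set q := \det Pp.
have q0 : q != 0.
  apply/negP => /eqP h; have := evalE 0; rewrite -/q h horner0 scale0r addr0 hN det1.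
  by move/eqP; rewrite eq_sym oner_eq0.
pose rs := [seq (i.+1)%:R : R | i <- iota 0 (size q)].
have urs : uniq rs.
  by rewrite map_inj_uniq ?iota_uniq // => a b /eqP; rewrite eqr_nat => /eqP[].
have : ~~ all (root q) rs.
  apply/negP => hall; have := max_poly_roots q0 hall urs.
  by rewrite size_map size_iota ltnn.
case/allPn => t /mapP [i _ ->] nr; exists (i.+1)%:R; split; first by rewrite pnatr_eq0.
have hu : ctrb_mx (C + (i.+1)%:R *: A) B *m N \in unitmx.
  by rewrite unitmxE unitfE -evalE.
apply/eqP; rewrite eqn_leq rank_leq_row /=.
by rewrite -{1}(mxrank_unit hu) mxrankM_maxl.
Qed.

Lemma scale_ctrl (R : fieldType) n m (X : 'M[R]_n) (B : 'M[R]_(n,m)) (a : R) :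
  a != 0 -> controllable X B -> controllable (a *: X) B.
Proof.
move=> a0 hc; apply/ctrlP => v hv; apply: (proj1 (ctrlP _ _) hc) => k.
have e : forall k, (a *: X) ^+ k = a ^+ k *: X ^+ k.
  elim=> [|j IH]; first by rewrite !expr0 scale1r.
  by rewrite !exprS IH -!mulmxE -scalemxAl -scalemxAr scalerA -exprS.
have := hv k; rewrite e -scalemxAl -scalemxAr => /eqP.
by rewrite scaler_eq0 expf_eq0 (negbTE a0) andbF /= => /eqP.
Qed.


Lemma nnz_row_mx (R : fieldType) p q1 q2 (X : 'M[R]_(p, q1)) (Y : 'M[R]_(p, q2)) :
  (nnz (row_mx X Y) <= nnz X + nnz Y)%N.
Proof.
pose SX := [set ij : 'I_p * 'I_q1 | X ij.1 ij.2 != 0].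
pose SY := [set ij : 'I_p * 'I_q2 | Y ij.1 ij.2 != 0].
pose fX := fun ij : 'I_p * 'I_q1 => (ij.1, lshift q2 ij.2).
pose fY := fun ij : 'I_p * 'I_q2 => (ij.1, rshift q1 ij.2).
have -> : nnz X = #|SX| by rewrite /nnz cardsE.
have -> : nnz Y = #|SY| by rewrite /nnz cardsE.
apply: leq_trans (_ : #|fX @: SX :|: fY @: SY| <= _)%N.
  apply: subset_leq_card; apply/subsetP => -[i j]; rewrite inE /= => h.
  have := splitK j; case: (split j) => [j1|j2] /= ej; rewrite -ej in h *.
    by apply/setUP; left; apply/imsetP; exists (i, j1); rewrite // inE /= -(row_mxEl X Y).
  by apply/setUP; right; apply/imsetP; exists (i, j2); rewrite // inE /= -(row_mxEr X Y).
rewrite cardsU; apply: leq_trans (leq_subr _ _) _.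
by apply: leq_add; apply: leq_imset_card.
Qed.

Lemma nnz_scale (R : fieldType) p q (a : R) (X : 'M[R]_(p, q)) : (nnz (a *: X) <= nnz X)%N.
Proof.
apply: subset_leq_card; apply/subsetP => -[i j]; rewrite !inE /= mxE.
by apply: contraNneq => ->; rewrite mulr0.
Qed.

Lemma nnz0 (R : fieldType) p q : nnz (0 : 'M[R]_(p, q)) = 0%N.
Proof. by apply: eq_card0 => -[i j]; rewrite !inE /= mxE eqxx. Qed.

Lemma nnz_delta (R : fieldType) p q (i0 : 'I_p) (j0 : 'I_q) :
  (nnz (delta_mx i0 j0 : 'M[R]_(p, q)) <= 1)%N.
Proof.
rewrite -(card1 (i0, j0)); apply: subset_leq_card; apply/subsetP => -[i j].
rewrite !inE /= mxE xpair_eqE.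
by case: (i == i0); case: (j == j0); rewrite //= eqxx.
Qed.

Lemma nnz_chain (R : fieldType) n (p : 'I_n) (Q : {set 'I_n}) :
  (nnz (chainC R p Q) <= #|Q|)%N.
Proof.
set s := p :: enum Q.
pose f := fun k : 'I_#|Q| => (nth p s k.+1, nth p s k).
apply: leq_trans (_ : #|f @: [set: 'I_#|Q|]| <= _)%N; last first.
  by apply: leq_trans (leq_imset_card _ _) _; rewrite cardsT card_ord.
apply: subset_leq_card; apply/subsetP => -[i j]; rewrite inE /= => h.
move: h; rewrite /chainC summxE.
case: (pickP (fun k : 'I_#|Q| => (i == nth p s k.+1) && (j == nth p s k))) => [k /andP[/eqP -> /eqP ->]|none].
  move=> _; apply/imsetP; exists k; first by rewrite inE.
  by [].

by rewrite big1 ?eqxx // => k _; rewrite mxE none.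
Qed.


Lemma part1 (R : realType) n m (A : 'M[R]_n) (B : 'M[R]_(n,m)) :
  (0 < \rank B)%N -> exists dA : 'M[R]_n,
    (nnz dA <= n - \rank B)%N /\ controllable (A + dA) B.
Proof.
move=> rB.
have [p [c hpc]] : exists p c, B p c != 0.
  case: (pickP (fun ij : 'I_n * 'I_m => B ij.1 ij.2 != 0)) => [[p c] h|none].
    by exists p, c.
  move: rB; rewrite lt0n mxrank_eq0 => /eqP []; apply/matrixP => i j.
  by have := none (i, j); rewrite mxE /= => /negbFE/eqP.
have [Q [hp [hcard kill]]] := pickQ hpc.
have hQn : (#|Q| < n)%N by lia.
have cC := chain_ctrl hpc hp hQn kill.
have [t [t0 ct]] := generic A cC.
exists (t^-1 *: chainC R p Q); split.
  by apply: leq_trans (nnz_scale _ _) _; apply: leq_trans (nnz_chain _ _ _) _; lia.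
have := scale_ctrl (invr_neq0 t0) ct.
by rewrite scalerDr scalerA mulVf // scale1r addrC.
Qed.


Unset Implicit Arguments. Set Strict Implicit.
Theorem theorem4 (R : realType) (n m : nat)
  (A : 'M[R]_n) (B : 'M[R]_(n, m)) :
  (0 < m)%N -> ~ controllable A B ->
  ((0 < \rank B)%N -> (rc A B <= n - \rank B)%N) /\
  (\rank B = 0%N -> (rc A B <= n)%N) /\
  (min_aug A B <= rc A B)%N.
Proof.
move=> m0 nc.
have n0 : (0 < n)%N.
  rewrite lt0n; apply/eqP => n0; apply: nc; apply/eqP.
  by rewrite eqn_leq rank_leq_row /= [X in (X <= _)%N]n0.
have bound : forall dA dB, controllable (A + dA) (B + dB) -> (rc A B <= nnz (row_mx dA dB))%N.
  move=> dA dB h; rewrite /rc; set P := (fun k => _).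
  have Pk : P (nnz (row_mx dA dB)) by exists dA, dB.
  by have [_ hm] := natminP (ex_intro _ _ Pk); apply: hm.
split.
  move=> rB; have [dA [h1 h2]] := part1 A rB.
  have := bound dA 0; rewrite addr0 => /(_ h2) h.
  by apply: leq_trans h _; apply: leq_trans (nnz_row_mx _ _) _; rewrite nnz0 addn0.
split.
  move=> /eqP; rewrite mxrank_eq0 => /eqP B0.
  pose dB : 'M[R]_(n, m) := delta_mx (Ordinal n0) (Ordinal m0).
  have rdB : (0 < \rank dB)%N.
    rewrite lt0n mxrank_eq0; apply/eqP => /matrixP /(_ (Ordinal n0) (Ordinal m0)).
    by rewrite !mxE !eqxx /= => /eqP; rewrite oner_eq0.
  have [dA [h1 h2]] := part1 A rdB.
  have := bound dA dB; rewrite B0 add0r => /(_ h2) h.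
  apply: leq_trans h _; apply: leq_trans (nnz_row_mx _ _) _.
  have hd : (nnz dB <= 1)%N := nnz_delta R (Ordinal n0) (Ordinal m0).
  apply: leq_trans (leq_add h1 hd) _; lia.
rewrite /rc; set P := (fun k => _).
have ex : exists k, P k.
  case: (posnP (\rank B)) => rB.
    move/eqP: rB; rewrite mxrank_eq0 => /eqP B0.
    pose dB : 'M[R]_(n, m) := delta_mx (Ordinal n0) (Ordinal m0).
    have rdB : (0 < \rank dB)%N.
      rewrite lt0n mxrank_eq0; apply/eqP => /matrixP /(_ (Ordinal n0) (Ordinal m0)).
      by rewrite !mxE !eqxx /= => /eqP; rewrite oner_eq0.
    have [dA [h1 h2]] := part1 A rdB.
    by exists (nnz (row_mx dA dB)), dA, dB; rewrite B0 add0r.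
  have [dA [h1 h2]] := part1 A rB.
  by exists (nnz (row_mx dA (0 : 'M[R]_(n, m)))), dA, 0; rewrite addr0.
have [[dA [dB [e h]]] _] := natminP ex.
by rewrite -e; apply: part2.
Qed.
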